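(* Let $\lambda\in\mathbb{R}$, let $$J_5=\begin{pmatrix}\lambda&1&0\\0&\lambda&0\\0&0&\lambda\end{pmatrix},$$ and $h>0$. If $\psi,\phi,\theta$ are any real numbers with $\phi\neq 0$, $1-\phi\lambda\theta\neq 0$ and $$\frac{\psi+\phi\lambda(1-\theta)}{1-\phi\lambda\theta}=e^{\lambda h},\qquad \phi\,\frac{1-\theta+\psi\theta}{(1-\phi\lambda\theta)^2}=he^{\lambda h},$$ then the difference scheme $$\frac{\mathbf{x}_{k+1}-\psi\mathbf{x}_k}{\phi}=J_5\big[\theta\mathbf{x}_{k+1}+(1-\theta)\mathbf{x}_k\big]$$ is exact for the system $\mathbf{x}'=J_5\mathbf{x}$.
   Context: A one-step difference scheme with step size $h>0$ for $\mathbf{x}'=M\mathbf{x}$ is called exact if for every initial vector $\mathbf{x}_0$ the sequence $(\mathbf{x}_k)$ it generates satisfies $\mathbf{x}_k=\mathbf{x}(kh)$ for all $k\ge 0$, where $\mathbf{x}(t)$ solves $\mathbf{x}'=M\mathbf{x}$, $\mathbf{x}(0)=\mathbf{x}_0$. *)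

(* Defs.v *)
From HB Require Import structures.
From mathcomp Require Import all_boot all_order all_algebra.
From mathcomp Require Import all_classical all_reals all_analysis.
Set Implicit Arguments. Unset Strict Implicit. Unset Printing Implicit Defensive.
Import Order.TTheory GRing.Theory Num.Theory.
Import numFieldNormedType.Exports.
Local Open Scope ring_scope.

Definition J5 (R : ringType) (l : R) : 'M[R]_3 :=
  \matrix_(i < 3, j < 3)
    (if i == j then l
     else if (nat_of_ord i == 0%N) && (nat_of_ord j == 1%N) then 1 else 0).

Definition ode_solution (R : realType) (n : nat) (M : 'M[R]_n)
    (x0 : 'cV[R]_n) (y : R -> 'cV[R]_n) : Prop :=
  y 0 = x0 /\ forall t : R, is_derive t (1 : R) y (M *m y t).

Definition scheme_exact (R : realType) (n : nat)
    (step : 'cV[R]_n -> 'cV[R]_n -> Prop) (M : 'M[R]_n) (h : R) : Prop :=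
  forall x0 : 'cV[R]_n,
    (exists x : nat -> 'cV[R]_n, x 0%N = x0 /\ forall k, step (x k) (x k.+1)) /\
    (forall (x : nat -> 'cV[R]_n) (y : R -> 'cV[R]_n),
        x 0%N = x0 -> (forall k, step (x k) (x k.+1)) ->
        ode_solution M x0 y ->
        forall k : nat, x k = y (k%:R * h)).

Definition theta_step (R : realType) (n : nat) (M : 'M[R]_n) (psi phi theta : R)
    (xk xk1 : 'cV[R]_n) : Prop :=
  phi^-1 *: (xk1 - psi *: xk) = M *m (theta *: xk1 + (1 - theta) *: xk).

(* Main.v *)
Require Import Defs.
From HB Require Import structures.
From mathcomp Require Import all_boot all_order all_algebra.
From mathcomp Require Import all_classical all_reals all_analysis.
From mathcomp Require Import ring lra.
Import Order.TTheory GRing.Theory Num.Theory.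
Import numFieldNormedType.Exports.
Local Open Scope ring_scope.


Lemma ord3 (i : 'I_3) : i = 0 \/ i = 1 \/ i = 2%:R.
Proof.
case: i => [[|[|[|m]]] Hm].
- by left; apply: val_inj.
- by right; left; apply: val_inj.
- by right; right; apply: val_inj.
- by [].
Qed.

Lemma J5v (R : ringType) (l : R) (v : 'cV[R]_3) :
  [/\ (J5 l *m v) 0 0 = l * v 0 0 + v 1 0,
      (J5 l *m v) 1 0 = l * v 1 0 & (J5 l *m v) 2%:R 0 = l * v 2%:R 0].
Proof.
have e1 : lift ord0 ord0 = 1 :> 'I_3 by apply: val_inj.
have e2 : lift ord0 (lift ord0 ord0) = 2%:R :> 'I_3 by apply: val_inj.
rewrite !mxE !big_ord_recl !big_ord0 !mxE /= e1 e2.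
by split; rewrite !(mul1r, mul0r, add0r, addr0).
Qed.

Lemma comp_derive (R : realType) n (y : R -> 'cV[R]_n) (t : R) D i :
  is_derive t (1:R) y D -> is_derive t (1:R) (fun s => y s i 0) (D i 0).
Proof.
move=> Hd.
have dy : derivable y t 1 by case: Hd.
have := derivable_mxP y t 1; case=> /(_ dy) dc _.
have -> : D i 0 = 'D_1 (fun s => y s i 0) t.
  have E : 'D_1 y t = D by exact: derive_val.
  by rewrite -E derive_mx // mxE.
exact: derivableP.
Qed.
Lemma scal_ode (R : realType) (lam k : R) (u : R -> R) :
  (forall t : R, is_derive t (1:R) u (lam * u t + k * expR (lam * t))) ->
  forall t, u t = expR (lam * t) * (u 0 + k * t).
Proof.
move=> Hu t.
have dl : forall s : R, is_derive s 1 (fun x => - lam * x) (- lam).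
  move=> s; have h : is_derive s (1:R) ((-lam) \*: (@id R)) ((-lam) *: (1:R)).
    exact: is_deriveZ.
  by move: h; rewrite [_ *: (1:R)]mulr1.
have de : forall s : R, is_derive s 1 (fun x => expR (- lam * x)) (expR (- lam * s) * - lam).
  move=> s; exact: (is_derive1_comp (f:=expR) (g:=fun x => - lam * x)).
have dw : forall s : R, is_derive s 1 (fun x => expR (- lam * x) * u x - k * x) 0.
  move=> s.
  have h1 := is_deriveM (de s) (Hu s).
  have h2 : is_derive s 1 (fun x => k * x) k.
    have h : is_derive s (1:R) (k \*: (@id R)) (k *: (1:R)).
      exact: is_deriveZ.
    by move: h; rewrite [_ *: (1:R)]mulr1.
  have h3 := is_deriveB h1 h2.
  set D := (X in is_derive _ _ _ X) in h3.
  suff -> : (0:R) = D by exact: h3.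
  rewrite /D; change ((0:R) = expR (-lam*s) * (lam*u s + k*expR (lam*s)) + u s * (expR (-lam*s) * -lam) - k).
  have E : expR (-lam*s) * expR (lam*s) = 1.
    by rewrite -expRD (_ : - lam * s + lam * s = 0) ?expR0 //; ring.
  rewrite (_ : expR (-lam*s) * (lam*u s + k*expR (lam*s)) = expR (-lam*s)*lam*u s + k*(expR (-lam*s) * expR (lam*s))); last ring.
  rewrite E; ring.
have := is_derive_0_is_cst t 0 dw.
rewrite mulr0 expR0 mul1r mulr0 subr0 => Hc.
have -> : u t = expR (lam * t) * (expR (- lam * t) * u t).
  by rewrite mulrA -expRD (_ : lam * t + - lam * t = 0) ?expR0 ?mul1r //; ring.
rewrite (_ : expR (- lam * t) * u t = u 0 + k * t); first by []. by rewrite -Hc; ring.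
Qed.

Lemma solve1 (F : fieldType) (lam psi phi theta z z1 g : F) :
  phi != 0 -> 1 - phi * lam * theta != 0 ->
  phi^-1 * (z1 - psi * z) = lam * (theta * z1 + (1 - theta) * z) + g ->
  z1 = (psi + phi * lam * (1 - theta)) / (1 - phi * lam * theta) * z
       + phi / (1 - phi * lam * theta) * g.
Proof.
move=> phi0 a0 H.
have E : z1 - ((psi + phi * lam * (1 - theta)) / (1 - phi * lam * theta) * z
       + phi / (1 - phi * lam * theta) * g) = phi / (1 - phi * lam * theta) *
   (phi^-1 * (z1 - psi * z) - (lam * (theta * z1 + (1 - theta) * z) + g)).
  by field; rewrite ?phi0 ?a0.
by apply/eqP; rewrite -subr_eq0 E H subrr mulr0.
Qed.

Arguments solve1 {F lam psi phi theta z z1 g}.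

Lemma step_iff (R : realType) (lam h psi phi theta : R) (x x1 : 'cV[R]_3) :
  phi != 0 -> 1 - phi * lam * theta != 0 ->
  (psi + phi * lam * (1 - theta)) / (1 - phi * lam * theta) = expR (lam * h) ->
  phi * ((1 - theta + psi * theta) / (1 - phi * lam * theta) ^+ 2)
    = h * expR (lam * h) ->
  theta_step (J5 lam) psi phi theta x x1 <->
  [/\ x1 0 0 = expR (lam * h) * x 0 0 + h * expR (lam * h) * x 1 0,
      x1 1 0 = expR (lam * h) * x 1 0 &
      x1 2%:R 0 = expR (lam * h) * x 2%:R 0].
Proof.
move=> phi0 a0 H3 H4.
have [J0 J1 J2] := J5v _ lam (theta *: x1 + (1 - theta) *: x).
rewrite -H4 -H3.
rewrite /theta_step; split.
- move=> H.
  have c0 := congr1 (fun M : 'M[R]_(3,1) => M 0 0) H.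
  have c1 := congr1 (fun M : 'M[R]_(3,1) => M 1 0) H.
  have c2 := congr1 (fun M : 'M[R]_(3,1) => M 2%:R 0) H.
  rewrite /= J0 !mxE in c0; rewrite /= J1 !mxE in c1; rewrite /= J2 !mxE in c2.
  have E1 := solve1 phi0 a0 (etrans c1 (esym (addr0 _))).
  have E2 := solve1 phi0 a0 (etrans c2 (esym (addr0 _))).
  have E0 := solve1 phi0 a0 c0.
  split => //; last by rewrite E2; ring.
  - rewrite E0 [X in theta * X]E1; field; by rewrite ?phi0 ?a0.
  - by rewrite E1; ring.
- case=> E0 E1 E2.
  apply/matrixP => i j; rewrite ord1; case: (ord3 i) => [->|[->|->]].
  + rewrite J0 !mxE E0 E1; field; by rewrite ?phi0 ?a0.
  + rewrite J1 !mxE E1; field; by rewrite ?phi0 ?a0.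
  + rewrite J2 !mxE E2; field; by rewrite ?phi0 ?a0.
Qed.

Theorem theorem9 (R : realType) (lam h psi phi theta : R) :
  0 < h -> phi != 0 -> 1 - phi * lam * theta != 0 ->
  (psi + phi * lam * (1 - theta)) / (1 - phi * lam * theta) = expR (lam * h) ->
  phi * ((1 - theta + psi * theta) / (1 - phi * lam * theta) ^+ 2)
    = h * expR (lam * h) ->
  scheme_exact (theta_step (J5 lam) psi phi theta) (J5 lam) h.
Proof.
move=> hpos phi0 a0 H3 H4 x0.
have SI := fun x x1 => @step_iff R lam h psi phi theta x x1 phi0 a0 H3 H4.
set e := expR (lam * h) in SI.
pose xs (k : nat) : 'cV[R]_3 := \col_i (e ^+ k * x0 i 0 +
   (if i == 0 then k%:R * h * e ^+ k * x0 1 0 else 0)).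
have xs0 : xs 0%N = x0.
  apply/matrixP => i j; rewrite ord1 !mxE.
  by case: (ord3 i) => [->|[->|->]] /=; rewrite ?mul0r ?mul1r ?addr0.
have stepxs : forall k, theta_step (J5 lam) psi phi theta (xs k) (xs k.+1).
  move=> k; apply/SI; rewrite !mxE /= !exprS [k.+1%:R]mulrSr; split; ring.
split.
  by exists xs; split.
move=> x y Hx0 Hs Hy k.
have Ex : forall k, x k = xs k.
  elim=> [|m IH]; first by rewrite Hx0 xs0.
  have := Hs m; rewrite IH => /SI [c0 c1 c2].
  apply/matrixP => i j; rewrite ord1.
  case: (ord3 i) => [->|[->|->]]; [rewrite c0|rewrite c1|rewrite c2];
    rewrite !mxE /= !exprS ?[m.+1%:R]mulrSr; ring.
case: Hy => y0 Hd.
have d i t : is_derive t (1:R) (fun s => y s i 0) ((J5 lam *m y t) i 0).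
  exact: comp_derive.
have Y1 : forall t, y t 1 0 = expR (lam * t) * (x0 1 0 + 0 * t).
  rewrite -y0; apply: scal_ode => t.
  have [_ J1 _] := J5v _ lam (y t).
  by rewrite mul0r addr0; rewrite -J1; exact: d.
have Y2 : forall t, y t 2%:R 0 = expR (lam * t) * (x0 2%:R 0 + 0 * t).
  rewrite -y0; apply: scal_ode => t.
  have [_ _ J2] := J5v _ lam (y t).
  by rewrite mul0r addr0; rewrite -J2; exact: d.
have Y0 : forall t, y t 0 0 = expR (lam * t) * (x0 0 0 + x0 1 0 * t).
  rewrite -y0; apply: scal_ode => t.
  have [J0 _ _] := J5v _ lam (y t).
  rewrite (_ : lam * y t 0 0 + y 0 1 0 * expR (lam * t) = (J5 lam *m y t) 0 0).
    exact: d.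
  by rewrite J0 [y t 1 0]Y1 -y0; ring.
rewrite Ex; apply/matrixP => i j; rewrite ord1.
have ek : expR (lam * (k%:R * h)) = e ^+ k.
  by rewrite -expRM_natl; congr expR; ring.
case: (ord3 i) => [->|[->|->]]; rewrite ?Y0 ?Y1 ?Y2 ek !mxE /=; ring.
Qed.
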